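(* There exists an absolute constant $c>0$ such that for all sufficiently large $T$ and every online policy $\texttt{ALG}$ (possibly randomized, and possibly using signaling schemes with arbitrary finite signal spaces), there is a problem instance with only $m=2$ states (a prior $\lambda$ and a user utility function $\rho$ satisfying the standing assumptions) on which $\mathrm{Reg}(\texttt{ALG})\ge c\log\log T$. That is, no online policy achieves expected regret better than $\Omega(\log\log T)$, even for instances with binary state.
   Context: Model. There is a finite state space $[m]$ and a prior $\lambda\in\Delta([m])$ known to everyone. Users have action set $\{0,1\}$ and a common utility function $\rho:[m]\times\{0,1\}\to\mathbb{R}$ unknown to the platform. Define $\omega(i)=(\rho(i,1)-\rho(i,0))\lambda(i)$. Standing assumptions: some state has $\omega(i)>0$, and $\sum_i\omega(i)<0$. In each of $T$ rounds: the platform commits to a finite signal space $\Sigma_t$ and a signaling scheme $\pi_t:[m]\to\Delta(\Sigma_t)$; a state $\theta_t\sim\lambda$ is drawn independently and a signal $\sigma_t\sim\pi_t(\theta_t,\cdot)$; user $t$ forms the Bayesian posterior given $\lambda,\pi_t,\sigma_t$ and takes an action $a_t$ maximizing her posterior expected utility; the platform obtains utility $a_t$. An online policy chooses $(\Sigma_t,\pi_t)$ in each round, possibly at random, as a function of the history of past observations (signals, user actions) and internal randomness. $U(\pi)$ is the platform's expected one-round utility under $\pi$. Let $\pi^*$ be an optimal solution of $\max_{\pi\in[0,1]^m}\sum_i\lambda(i)\pi(i)$ s.t. $\sum_i\omega(i)\pi(i)\ge0$ (as a direct scheme recommending action 1 in state $i$ w.p. $\pi(i)$), the optimal scheme in hindsight.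 The regret is $\mathrm{Reg}(\texttt{ALG})=T\,U(\pi^* )-\mathbb{E}[\sum_t U(\pi_t)]$. *)

(* Defs.v *)
From HB Require Import structures.
From mathcomp Require Import all_boot all_order all_algebra.
From mathcomp Require Import all_classical all_reals all_analysis.
Unset Printing Implicit Defensive.
Import Order.TTheory GRing.Theory Num.Theory.
Local Open Scope ring_scope.

Section Persuasion.
Context {R : realType}.

Definition state := 'I_2.
Definition prior := state -> R.
(* user utility rho : [m] x {0,1} -> R ; action 1 = true, action 0 = false *)
Definition utility := state -> bool -> R.

Definition is_prior (lam : prior) : Prop :=
  (forall i, 0 <= lam i) /\ \sum_i lam i = 1.

Definition omega (lam : prior) (rho : utility) (i : state) : R :=
  (rho i true - rho i false) * lam i.

Definition standing (lam : prior) (rho : utility) : Prop :=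
  (exists i, 0 < omega lam rho i) /\ \sum_i omega lam rho i < 0.

(* a signaling scheme with finite signal space 'I_nsig (any finite signal
   space is in bijection with some 'I_k) *)
Record scheme := Scheme { nsig : nat; sch : state -> 'I_nsig -> R }.

Definition valid_scheme (s : scheme) : Prop :=
  (forall i j, 0 <= sch s i j) /\ (forall i, \sum_j sch s i j = 1).

Definition sigprob (lam : prior) (s : scheme) (j : 'I_(nsig s)) : R :=
  \sum_i lam i * sch s i j.

Definition posterior (lam : prior) (s : scheme) (j : 'I_(nsig s)) (i : state) : R :=
  lam i * sch s i j / sigprob lam s j.

Definition post_util (lam : prior) (rho : utility) (s : scheme)
  (j : 'I_(nsig s)) (a : bool) : R :=
  \sum_i posterior lam s j i * rho i a.

(* the user's (posterior-utility maximizing) action; ties broken toward 1 *)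
Definition user_action (lam : prior) (rho : utility) (s : scheme)
  (j : 'I_(nsig s)) : bool :=
  post_util lam rho s j false <= post_util lam rho s j true.

Definition U (lam : prior) (rho : utility) (s : scheme) : R :=
  \sum_j sigprob lam s j * (nat_of_bool (user_action lam rho s j))%:R.

(* direct scheme: signal 1 recommends action 1 (w.p. p i in state i) *)
Definition direct (p : state -> R) : scheme :=
  @Scheme 2 (fun i (j : 'I_2) => if (j : nat) == 1%N then p i else 1 - p i).

Definition lp_feasible (lam : prior) (rho : utility) (p : state -> R) : Prop :=
  (forall i, 0 <= p i <= 1) /\ 0 <= \sum_i omega lam rho i * p i.

(* optimal solution of the LP defining the optimal scheme in hindsight *)
Definition is_lp_opt (lam : prior) (rho : utility) (p : state -> R) : Prop :=
  lp_feasible lam rho p /\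
  forall q, lp_feasible lam rho q -> \sum_i lam i * q i <= \sum_i lam i * p i.

(* history of observations: (signal, user action) per past round *)
Definition history := seq (nat * bool).

(* E[ sum of U(pi_t) over the remaining n rounds ] for a deterministic
   policy (given the internal randomness), starting from history h *)
Fixpoint exp_val (lam : prior) (rho : utility) (pol : history -> scheme)
  (n : nat) (h : history) : R :=
  match n with
  | 0 => 0
  | n'.+1 =>
      let s := pol h in
      U lam rho s +
      \sum_(j < nsig s) sigprob lam s j *
         exp_val lam rho pol n' (rcons h (nat_of_ord j, user_action lam rho s j))
  end.

(* online policy: uses the known prior, its internal randomness w : Omega,
   and the history of observations *)
Definition regret {d : measure_display} {Omega : measurableType d}
  (P : probability Omega R) (lam : prior) (rho : utility)
  (alg : prior -> Omega -> history -> scheme) (pstar : state -> R) (T : nat)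
  : \bar R :=
  ((T%:R * U lam rho (direct pstar))%:E
   - \int[P]_w (exp_val lam rho (alg lam w) T [::])%:E)%E.

End Persuasion.

Arguments prior R : clear implicits.
Arguments utility R : clear implicits.
Arguments scheme R : clear implicits.

(* Main.v *)
Require Import Defs.
From HB Require Import structures.
From mathcomp Require Import all_boot all_order all_algebra.
From mathcomp Require Import all_classical all_reals all_analysis.
From mathcomp Require Import ring lra zify.
Import Order.TTheory GRing.Theory Num.Theory.
Local Open Scope ring_scope.
Set Implicit Arguments.
Unset Strict Implicit.



Section Core.
Variable R : realType.

Lemma ln_le_sub (p q : R) : 0 < p -> 0 < q -> ln q - ln p <= q / p - 1.
Proof.
move=> p0 q0.
rewrite -ln_div ?posrE //.
have h : -1 < q / p - 1 by have := divr_gt0 q0 p0; lra.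
by have := le_ln1Dx h; rewrite addrC subrK.
Qed.

Lemma ln_ge1 (x : R) : 8 <= x -> 1 <= ln x.
Proof.
move=> x8.
have h2 : 1 / 2 <= ln (2 : R).
  have := @ln_le_sub 2 1 ltac:(lra) ltac:(lra).
  rewrite ln1; lra.
have e8 : (8 : R) = 2 ^+ 3 by rewrite !exprS expr0; lra.
have l8 : 1 <= ln (8 : R).
  rewrite e8 lnXn; last lra.
  rewrite -[_ *+ 3]mulr_natr; lra.
apply: (le_trans l8).
by rewrite ler_ln // posrE; lra.
Qed.

Definition Phi (N k : nat) : R := ln (ln (N%:R / k%:R)).

Lemma ratio_ge8 (N k : nat) : (0 < k)%N -> (8 * k <= N)%N -> 8 <= N%:R / k%:R :> R.
Proof.
move=> k0 hk.
have h : (8 * k)%:R <= N%:R :> R by rewrite ler_nat.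
rewrite natrM in h.
have kp : 0 < k%:R :> R by rewrite ltr0n.
by rewrite ler_pdivlMr //.
Qed.

Lemma ln_sub1 (y : R) : 0 < y -> ln y <= y - 1.
Proof. by move=> y0; have := @ln_le_sub 1 y ltr01 y0; rewrite ln1 divr1 subr0. Qed.

Lemma Phi_diff (N k k' : nat) : (0 < k')%N -> (k' <= k)%N -> (8 * k <= N)%N ->
  Phi N k' - Phi N k <= ln (k%:R / k'%:R) / ln (N%:R / k%:R).
Proof.
move=> k'0 kk hk.
have k0 : (0 < k)%N by apply: leq_trans kk.
have kp : 0 < k%:R :> R by rewrite ltr0n.
have k'p : 0 < k'%:R :> R by rewrite ltr0n.
have u8 := ratio_ge8 k0 hk.
have L1 := ln_ge1 u8.
have y1 : 1 <= k%:R / k'%:R :> R by rewrite ler_pdivlMr // mul1r ler_nat.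
have l0 := ln_ge0 y1.
have e : ln (N%:R / k'%:R) = ln (N%:R / k%:R) + ln (k%:R / k'%:R) :> R.
  rewrite -lnM ?posrE; [|lra|lra].
  congr ln; rewrite mulrA divfK //; lra.
rewrite /Phi e.
have := @ln_le_sub (ln (N%:R / k%:R)) (ln (N%:R / k%:R) + ln (k%:R / k'%:R)) ltac:(lra) ltac:(lra).
rewrite mulrDl divff; last lra.
by rewrite addrAC subrr add0r.
Qed.

Lemma T2_bound (N k1 k2 : nat) : (0 < k1 + k2)%N -> (8 * (k1 + k2) <= N)%N ->
  k2%:R * (Phi N k2 - Phi N (k1 + k2)) <= k1%:R :> R.
Proof.
move=> k0 hk.
case: (posnP k2) => [->|k2p]; first by rewrite mul0r ler0n.
have kp : 0 < (k1 + k2)%:R :> R by rewrite ltr0n.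
have k2r : 0 < k2%:R :> R by rewrite ltr0n.
have h := @Phi_diff N (k1 + k2) k2 k2p (leq_addl _ _) hk.
have L1 := ln_ge1 (ratio_ge8 k0 hk).
have y1 : 1 <= (k1 + k2)%:R / k2%:R :> R by rewrite ler_pdivlMr // mul1r ler_nat leq_addl.
have l0 := ln_ge0 y1.
have h2 : ln ((k1 + k2)%:R / k2%:R) / ln (N%:R / (k1 + k2)%:R) <= ln ((k1 + k2)%:R / k2%:R) :> R.
  by rewrite ler_pdivrMr ?ler_peMr //; lra.
have h3 := @ln_sub1 ((k1 + k2)%:R / k2%:R) ltac:(lra).
have h4 : Phi N k2 - Phi N (k1 + k2) <= (k1 + k2)%:R / k2%:R - 1 by lra.
apply: le_trans (ler_wpM2l (ltW k2r) h4) _.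
rewrite mulrBr mulr1 mulrCA divff ?mulr1; last lra.
by rewrite natrD; lra.
Qed.

Lemma T1_bound (N k k1 : nat) : (0 < k)%N -> (8 * k <= N)%N -> (k1 <= k)%N ->
  let T1 := k1%:R * (Phi N k1 - Phi N k) : R in
  T1 <= 2 * k1%:R \/ (T1 <= 2 * k%:R ^+ 2 / N%:R /\ 64 * k1%:R <= k%:R :> R).
Proof.
move=> k0 hk kk T1.
case: (posnP k1) => [k10|k1p].
  by left; rewrite /T1 k10 !mul0r mulr0.
have kp : 0 < k%:R :> R by rewrite ltr0n.
have k1r : 0 < k1%:R :> R by rewrite ltr0n.
have Np : 0 < N%:R :> R.
  rewrite ltr0n; apply: leq_trans hk; by rewrite muln_gt0.
have h := @Phi_diff N k k1 k1p kk hk.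
have u8 := ratio_ge8 k0 hk.
have L1 := ln_ge1 u8.
set u := N%:R / k%:R in u8 L1 h.
set y := k%:R / k1%:R in h.
have y1 : 1 <= y by rewrite /y ler_pdivlMr // mul1r ler_nat.
have l0 := ln_ge0 y1.
have hT : T1 <= k1%:R * (ln y / ln u) by rewrite /T1 ler_wpM2l // ltW.
have h2 : ln y / ln u <= ln y by rewrite ler_pdivrMr ?ler_peMr //; lra.
case: (lerP (ln y) (2 * ln u)) => hl.
  left; apply: le_trans hT _.
  rewrite [X in _ <= X]mulrC ler_pM2l //.
  by rewrite ler_pdivrMr //; lra.
right.
have up : 0 < u by lra.
have yu : u ^+ 2 < y.
  rewrite -(@ltr_ln R) ?posrE; [|by rewrite exprn_gt0|lra].
  by rewrite lnXn // -mulr_natr; lra.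
have yu1 : u <= y / u.
  rewrite ler_pdivlMr // -expr2; lra.
have ly : ln y <= 2 * (y / u).
  have e : ln y = ln u + ln (y / u).
    rewrite -lnM ?posrE; [|lra|by rewrite divr_gt0 //; lra].
    by rewrite mulrC divfK //; lra.
  have := @ln_sub1 u up; have := @ln_sub1 (y / u) (divr_gt0 (lt_le_trans ltr01 y1) up).
  lra.
have ky : k1%:R * y = k%:R by rewrite /y mulrC divfK //; lra.
split.
  apply: le_trans hT _; apply: le_trans (ler_wpM2l (ltW k1r) h2) _.
  apply: le_trans (ler_wpM2l (ltW k1r) ly) _.
  have -> : k1%:R * (2 * (y / u)) = 2 * k%:R / u by rewrite -ky; ring.
  rewrite /u le_eqVlt; apply/orP; left; apply/eqP; field.
  by rewrite (gt_eqF Np) (gt_eqF kp).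
have y64 : 64 <= y.
  apply: le_trans (ltW yu).
  have : 8 * 8 <= u * u by apply: ler_pM; lra.
  rewrite expr2; lra.
by rewrite -ky [k1%:R * y]mulrC ler_pM2r.
Qed.

Lemma coreB (N k1 k2 : nat) : (0 < k1 + k2)%N -> (8 * (k1 + k2) <= N)%N ->
  (1 / 96) * (k1%:R * (Phi N k1 - Phi N (k1 + k2)) + k2%:R * (Phi N k2 - Phi N (k1 + k2)))
  <= (k1%:R + k2%:R * (k2%:R - 1) / (2 * N%:R)) / 8 :> R.
Proof.
move=> k0 hk.
have t2 := T2_bound k0 hk.
have Np : 0 < N%:R :> R.
  rewrite ltr0n; apply: leq_trans hk; by rewrite muln_gt0.
have iN : 0 <= (2 * N%:R)^-1 :> R by rewrite invr_ge0; lra.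
have k2r : 0 <= k2%:R :> R by rewrite ler0n.
have q0 : 0 <= k2%:R * (k2%:R - 1) / (2 * N%:R) :> R.
  case: (posnP k2) => [->|k2p]; first by rewrite !mul0r.
  have : 1 <= k2%:R :> R by rewrite ler1n.
  move=> h1; apply: mulr_ge0 => //; apply: mulr_ge0; lra.
case: (posnP k1) => [k10|k1p].
  move: t2; rewrite k10 !mul0r add0r => t2; lra.
have k1r : 1 <= k1%:R :> R by rewrite ler1n.
have [t1|[t1 h64]] := T1_bound (k1 := k1) k0 hk (leq_addr _ _).
  lra.
rewrite natrD in t1 h64.
have q : (k1%:R + k2%:R) ^+ 2 / 3 <= k2%:R * (k2%:R - 1) :> R.
  rewrite expr2; nra.
have q2 := ler_wpM2r iN q.
have e1 : (k1%:R + k2%:R) ^+ 2 / 3 * (2 * N%:R)^-1 = ((k1%:R + k2%:R) ^+ 2 / N%:R) / 6 :> R.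
  by field; rewrite (gt_eqF Np).
have e2 : 2 * (k1%:R + k2%:R) ^+ 2 / N%:R = 2 * ((k1%:R + k2%:R) ^+ 2 / N%:R) :> R by ring.
rewrite e1 in q2; rewrite e2 in t1.
lra.
Qed.

Definition Lam (n : nat) : R := ln (ln (n + 8)%:R).
Definition Fn (N n k : nat) : R := (1 / 96) * k%:R * Num.max 0 (Lam n - Phi N k).

Lemma frac_le (a b c d : R) : 0 < b -> 0 < d -> a * d <= c * b -> a / b <= c / d.
Proof.
move=> b0 d0 h.
have e : a / b - c / d = (a * d - c * b) / (b * d) by field; rewrite (gt_eqF b0) (gt_eqF d0).
have : (a * d - c * b) / (b * d) <= 0.
  by rewrite pmulr_lle0 ?invr_gt0 ?mulr_gt0 //; lra.
lra.
Qed.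

Lemma Lam_inc (n : nat) : 0 <= Lam n.+1 - Lam n <= 1 / (n + 8)%:R.
Proof.
have a8 : 8 <= (n + 8)%:R :> R by rewrite ler_nat leq_addl.
have b8 : (n + 8)%:R + 1 = (n.+1 + 8)%:R :> R by rewrite natr1 addSn.
have la := ln_ge1 a8.
have lab : ln (n + 8)%:R <= ln (n.+1 + 8)%:R :> R.
  by rewrite ler_ln ?posrE //; lra.
have h1 := @ln_le_sub ((n + 8)%:R) ((n.+1 + 8)%:R) ltac:(lra) ltac:(lra).
have h2 := @ln_le_sub (ln (n + 8)%:R) (ln (n.+1 + 8)%:R) ltac:(lra) ltac:(lra).
have e1 : (n.+1 + 8)%:R / (n + 8)%:R - 1 = 1 / (n + 8)%:R :> R.
  by rewrite -b8; field; apply: lt0r_neq0; lra.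
have e2 : ln (n.+1 + 8)%:R / ln (n + 8)%:R - 1 = (ln (n.+1 + 8)%:R - ln (n + 8)%:R) / ln (n + 8)%:R :> R.
  by field; apply: lt0r_neq0; lra.
have h3 : (ln (n.+1 + 8)%:R - ln (n + 8)%:R) / ln (n + 8)%:R <= ln (n.+1 + 8)%:R - ln (n + 8)%:R :> R.
  by rewrite ler_pdivrMr ?ler_peMr //; lra.
have mono : Lam n <= Lam n.+1.
  by rewrite /Lam ler_ln ?posrE //; lra.
rewrite /Lam in mono *; apply/andP; split; lra.
Qed.

Lemma Fn_ge0 (N n k : nat) : 0 <= Fn N n k.
Proof.
rewrite /Fn; apply: mulr_ge0; first by apply: mulr_ge0; [lra|rewrite ler0n].
by rewrite le_max lexx.
Qed.

Lemma Fn_lin (N n k : nat) : (1 / 96) * k%:R * (Lam n - Phi N k) <= Fn N n k.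
Proof.
rewrite /Fn; apply: ler_wpM2l; first by apply: mulr_ge0; [lra|rewrite ler0n].
by rewrite le_max lexx orbT.
Qed.

Lemma Fn0 (N k : nat) : (8 * k <= N)%N -> Fn N 0 k = 0.
Proof.
move=> hk; case: (posnP k) => [->|kp]; first by rewrite /Fn mulr0 mul0r.
have u8 := ratio_ge8 kp hk.
have : Lam 0 <= Phi N k.
  rewrite /Lam /Phi add0n ler_ln ?posrE.
  - by rewrite ler_ln ?posrE //; lra.
  - by apply: lt_le_trans (ln_ge1 (lexx _)); lra.
  - by apply: lt_le_trans (ln_ge1 u8); lra.
move=> h; rewrite /Fn.
have -> : Num.max 0 (Lam 0 - Phi N k) = 0.
  by apply/le_anti; rewrite ge_max lexx le_max lexx /=; lra.
by rewrite mulr0.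
Qed.

Lemma Sig_ge0 (N k1 k2 : nat) : (0 < N)%N ->
  0 <= (k1%:R + k2%:R * (k2%:R - 1) / (2 * N%:R)) / 8 :> R.
Proof.
move=> N0.
have Np : 0 < N%:R :> R by rewrite ltr0n.
have iN : 0 <= (2 * N%:R)^-1 :> R by rewrite invr_ge0; lra.
have k1r : 0 <= k1%:R :> R by rewrite ler0n.
have q0 : 0 <= k2%:R * (k2%:R - 1) / (2 * N%:R) :> R.
  case: (posnP k2) => [->|k2p]; first by rewrite !mul0r.
  have : 1 <= k2%:R :> R by rewrite ler1n.
  move=> h1; apply: mulr_ge0 => //; apply: mulr_ge0; lra.
lra.
Qed.

Lemma coreX (N n k1 k2 : nat) : (0 < k1 + k2)%N -> (8 * (k1 + k2) <= N)%N ->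
  - ((k1%:R + k2%:R * (k2%:R - 1) / (2 * N%:R)) / 8) <= Fn N n k1 + Fn N n k2 - Fn N n (k1 + k2).
Proof.
move=> k0 hk.
have B := coreB k0 hk.
have N0 : (0 < N)%N by apply: leq_trans hk; rewrite muln_gt0.
have s0 := Sig_ge0 k1 k2 N0.
have f1 := Fn_ge0 N n k1; have f2 := Fn_ge0 N n k2.
have g1 := Fn_lin N n k1; have g2 := Fn_lin N n k2.
rewrite {3}/Fn.
case: ler0P => h.
  rewrite mulr0; lra.
have e : (1/96) * k1%:R * (Lam n - Phi N k1) + (1/96) * k2%:R * (Lam n - Phi N k2)
   - (1/96) * (k1 + k2)%:R * (Lam n - Phi N (k1 + k2)) =
   - ((1 / 96) * (k1%:R * (Phi N k1 - Phi N (k1 + k2)) + k2%:R * (Phi N k2 - Phi N (k1 + k2)))) :> R.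
  rewrite natrD; ring.
lra.
Qed.

Lemma coreA (N n k1 k2 : nat) : (0 < k1 + k2)%N -> (8 * (k1 + k2) <= N)%N -> (n + 9 <= N)%N ->
  Fn N n.+1 (k1 + k2) - Fn N n (k1 + k2) <= (k1%:R + k2%:R * (k2%:R - 1) / (2 * N%:R)) / 8.
Proof.
move=> k0 hk hn.
have N0 : (0 < N)%N by apply: leq_trans hk; rewrite muln_gt0.
have s0 := Sig_ge0 k1 k2 N0.
have /andP[li1 li2] := Lam_inc n.
rewrite /Fn.
set k := (k1 + k2)%N.
set a' := Lam n.+1 - Phi N k.
set a := Lam n - Phi N k.
have kr : 0 <= k%:R :> R by rewrite ler0n.
case: (ler0P a') => ha'.
  have : 0 <= Num.max 0 a by rewrite le_max lexx.
  move=> h; have : 0 <= 1 / 96 * k%:R * Num.max 0 a by apply: mulr_ge0 => //; apply: mulr_ge0 => //; lra.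
  rewrite mulr0; lra.
have hm : a <= Num.max 0 a by rewrite le_max lexx orbT.
have D1 : 1 / 96 * k%:R * a' - 1 / 96 * k%:R * Num.max 0 a <= 1 / 96 * k%:R * (1 / (n + 8)%:R).
  rewrite -mulrBr; apply: ler_wpM2l; first by apply: mulr_ge0 => //; lra.
  rewrite /a' /a in hm *; lra.
apply: le_trans D1 _.
have kp : (0 < k)%N by [].
have u8 := ratio_ge8 kp hk.
have Np : 0 < N%:R :> R by rewrite ltr0n.
have kr1 : 0 < k%:R :> R by rewrite ltr0n.
have x8 : 8 <= (n + 8)%:R :> R by rewrite ler_nat leq_addl.
have big : N%:R < (n + 9)%:R * k%:R :> R.
  have : Phi N k < Lam n.+1 by rewrite /a' in ha'; lra.
  rewrite /Phi /Lam ltr_ln ?posrE; last first.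
  - by apply: lt_le_trans (ln_ge1 _); [lra| rewrite ler_nat; apply: leq_trans (leq_addl _ _)].
  - by apply: lt_le_trans (ln_ge1 u8); lra.
  rewrite ltr_ln ?posrE; [|lra|rewrite ltr0n addn_gt0 orbT //].
  by rewrite ltr_pdivrMr // addSn -addnS.
have kge2 : (2 <= k)%N.
  rewrite leqNgt; apply/negP => hk2.
  have k1e : k = 1%N by apply/eqP; rewrite eqn_leq -ltnS hk2 kp.
  rewrite k1e mulr1 ltr_nat in big.
  by have := leq_ltn_trans hn big; rewrite ltnn.
have k2r : 2 <= k%:R :> R by rewrite ler_nat.
have H1 : k%:R * (k%:R - 1) / (2 * N%:R) <= k1%:R + k2%:R * (k2%:R - 1) / (2 * N%:R) :> R.
  have kN : k%:R <= N%:R :> R.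
    by rewrite ler_nat; apply: leq_trans hk; rewrite leq_pmull.
  have e : k1%:R + k2%:R * (k2%:R - 1) / (2 * N%:R) - k%:R * (k%:R - 1) / (2 * N%:R)
     = (k1%:R * (2 * N%:R) + k2%:R * (k2%:R - 1) - k%:R * (k%:R - 1)) / (2 * N%:R) :> R.
    by field; apply: lt0r_neq0; lra.
  have : 0 <= (k1%:R * (2 * N%:R) + k2%:R * (k2%:R - 1) - k%:R * (k%:R - 1)) / (2 * N%:R) :> R.    apply: divr_ge0; last lra.
    have ek : k%:R = k1%:R + k2%:R :> R by rewrite natrD.
    have : 0 <= k1%:R :> R by rewrite ler0n.
    have : 0 <= k2%:R :> R by rewrite ler0n.
    rewrite ek in kN *; nra.
  lra.
have H2 : 1 / 96 * k%:R * (1 / (n + 8)%:R) <= k%:R * (k%:R - 1) / (2 * N%:R) / 8 :> R.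
  have -> : 1 / 96 * k%:R * (1 / (n + 8)%:R) = k%:R / (96 * (n + 8)%:R) :> R.
    by field; apply: lt0r_neq0; lra.
  have -> : k%:R * (k%:R - 1) / (2 * N%:R) / 8 = k%:R * (k%:R - 1) / (16 * N%:R) :> R.
    by field; apply: lt0r_neq0; lra.
  apply: frac_le; [lra|lra|].
  have e9 : (n + 9)%:R = (n + 8)%:R + 1 :> R by rewrite natr1 addnS.
  rewrite e9 in big.
  nra.
lra.
Qed.

End Core.



Section Model.
Variable R : realType.

Definition s1 : state := Ordinal (isT : (1 < 2)%N).
Definition lam0 : prior R := fun _ => 1 / 2.
Definition rhoa (a : R) : utility R :=
  fun i b => if b then (if i == ord0 then a else -1) else 0.

Lemma sum_state (F : state -> R) : \sum_i F i = F ord0 + F s1.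
Proof.
rewrite /state big_ord_recl big_ord_recl big_ord0 addr0.
by congr (_ + F _); apply/val_inj.
Qed.

Definition xs (s : scheme R) (j : 'I_(nsig s)) := sch s ord0 j.
Definition ys (s : scheme R) (j : 'I_(nsig s)) := sch s s1 j.

Lemma sigprob_eq (s : scheme R) j : sigprob lam0 s j = (xs j + ys j) / 2.
Proof. by rewrite /sigprob sum_state /lam0 /xs /ys; field. Qed.

Lemma user_action_eq (a : R) (s : scheme R) j : 0 <= xs j -> 0 <= ys j ->
  user_action lam0 (rhoa a) s j = (ys j <= a * xs j).
Proof.
move=> x0 y0.
rewrite /user_action /post_util !sum_state /posterior /rhoa /= sigprob_eq /lam0.
rewrite !mulr0 addr0.
have e : 1 / 2 * sch s ord0 j / ((xs j + ys j) / 2) * a + 1 / 2 * sch s s1 j / ((xs j + ys j) / 2) * -1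
   = (a * xs j - ys j) / (xs j + ys j).
  rewrite /xs /ys.
  case: (eqVneq (sch s ord0 j + sch s s1 j) 0) => h.
    rewrite h !mul0r !invr0 !mulr0 !mul0r; lra.
  by field; rewrite h.
rewrite e.
case: (eqVneq (xs j + ys j) 0) => h.
  have xz : xs j = 0 by lra.
  have yz : ys j = 0 by lra.
  by rewrite h invr0 mulr0 lexx xz yz mulr0 lexx.
have hp : 0 < xs j + ys j by rewrite lt_def h /=; lra.
rewrite pmulr_lge0 ?invr_gt0 //.
by rewrite subr_ge0.
Qed.

Definition ell (a x y : R) := if y <= a * x then (a * x - y) / 2 else x * (1 + a) / 2.

Lemma sum_xs (s : scheme R) : valid_scheme s -> \sum_(j < nsig s) xs j = 1.
Proof. by case=> _ h; apply: h. Qed.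

Lemma sum_ys (s : scheme R) : valid_scheme s -> \sum_(j < nsig s) ys j = 1.
Proof. by case=> _ h; apply: h. Qed.

Lemma sum_sp (s : scheme R) : valid_scheme s -> \sum_j sigprob lam0 s j = 1.
Proof.
move=> v; under eq_bigr do rewrite sigprob_eq.
rewrite -mulr_suml big_split /= sum_xs // sum_ys //; lra.
Qed.

Lemma loss_eq (a : R) (s : scheme R) : valid_scheme s ->
  (1 + a) / 2 - U lam0 (rhoa a) s = \sum_(j < nsig s) ell a (xs j) (ys j).
Proof.
move=> v; have [v0 _] := v.
have -> : (1 + a) / 2 = \sum_(j < nsig s) (xs j * (1 + a) / 2).
  by rewrite -mulr_suml -mulr_suml sum_xs // mul1r.
rewrite /U -sumrB; apply: eq_bigr => j _.
rewrite user_action_eq ?sigprob_eq /ell; [|exact: v0|exact: v0].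
by case: ifP => _ /=; rewrite ?mulr1 ?mulr0; field.
Qed.

End Model.



Section Grid.
Variable R : realType.

Definition ag (N i : nat) : R := (i.+1)%:R / N%:R.

Lemma grid_sum (N T : nat) (A : {set 'I_T}) (r : R) : (0 < N)%N ->
  (forall i, i \in A -> r <= ag N i) ->
  #|A|%:R * (#|A|%:R - 1) / (2 * N%:R) <= \sum_(i in A) (ag N i - r).
Proof.
move=> N0.
have Np : 0 < N%:R :> R by rewrite ltr0n.
have iN : 0 < 1 / N%:R :> R by rewrite divr_gt0.
suff H : forall k (A : {set 'I_T}) (r : R), #|A| = k -> (forall i, i \in A -> r <= ag N i) ->
  k%:R * (k%:R - 1) / (2 * N%:R) <= \sum_(i in A) (ag N i - r).
  by move=> hA; apply: H.
elim=> [|k IH] {}A {}r hk hr.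
  rewrite mul0r mul0r.
  move/eqP: hk; rewrite cards_eq0 => /eqP ->.
  by rewrite big_set0.
have : (0 < #|A|)%N by rewrite hk.
case/card_gt0P => i0 i0A.
case: (arg_minnP (fun i : 'I_T => val i) i0A) => m mA0 mmin.
have mA : m \in A := mA0.
rewrite (bigD1 m) //=.
have hk' : #|A :\ m| = k.
  by move: hk; rewrite (cardsD1 m A) mA add1n => -[].
have hr' : forall i, i \in A :\ m -> r + 1 / N%:R <= ag N i.
  move=> i; rewrite in_setD1 => /andP[im iA].
  have lt : (val m < val i)%N.
    by rewrite ltn_neqAle mmin // andbT; apply: contra im => /eqP e; apply/eqP/val_inj.
  have : ag N m + 1 / N%:R <= ag N i.
    by rewrite /ag -mulrDl ler_pM2r ?invr_gt0 // natr1 ler_nat.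
  have := hr m mA; lra.
rewrite (eq_bigl (fun i => i \in A :\ m) (fun i => ag N i - r)); last by move=> i; rewrite in_setD1 andbC.
have := IH _ _ hk' hr'.
have -> : \sum_(i in A :\ m) (ag N i - r) = \sum_(i in A :\ m) (ag N i - (r + 1 / N%:R)) + k%:R * (1 / N%:R).
  rewrite -[k in k%:R * _]hk' mulr_natl -sumr_const -big_split /=; apply: eq_bigr => i _; ring.
have := hr m mA.
move=> h1 h2.
have e : k.+1%:R * (k.+1%:R - 1) / (2 * N%:R) = k%:R * (k%:R - 1) / (2 * N%:R) + k%:R * (1 / N%:R) :> R.
  rewrite -natr1; field; apply: lt0r_neq0; lra.
rewrite e; lra.
Qed.

Lemma Fn_card0 (N n : nat) : Fn R N n 0 = 0.
Proof. by rewrite /Fn mulr0 mul0r. Qed.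

Lemma ag_bounds (T : nat) (i : 'I_T) : 0 < ag (8 * T) i <= 1 / 8.
Proof.
have T0 : (0 < T)%N by case: i => /= j; case: T => // *.
have Tp : 0 < T%:R :> R by rewrite ltr0n.
have Np : 0 < 8 * T%:R :> R by lra.
have h : (i.+1)%:R <= T%:R :> R by rewrite ler_nat.
have h1 : 0 < (i.+1)%:R :> R by rewrite ltr0n.
rewrite /ag natrM; apply/andP; split; first by apply: divr_gt0.
rewrite ler_pdivrMr //; lra.
Qed.

Lemma per_signal (T n : nat) (x y : R) (S : {set 'I_T}) : (2 <= T)%N -> (n < T)%N ->
  0 <= x -> 0 <= y ->
  (x + y) / 2 * Fn R (8 * T) n #|S| + x * (Fn R (8 * T) n.+1 #|S| - Fn R (8 * T) n #|S|)
  <= \sum_(i in S) ell (ag (8 * T) i) x y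
     + (x + y) / 2 * (Fn R (8 * T) n #|S :&: [set i : 'I_T | y <= ag (8 * T) i * x]|
                     + Fn R (8 * T) n #|S :\: [set i : 'I_T | y <= ag (8 * T) i * x]|).
Proof.
move=> T2 nT x0 y0.
set N := (8 * T)%N.
set P := [set i : 'I_T | y <= ag N i * x].
have N0 : (0 < N)%N by rewrite /N muln_gt0; apply: leq_trans T2.
have hn9 : (n + 9 <= N)%N by rewrite /N; lia.
have kT : (#|S| <= T)%N by rewrite -[X in (_ <= X)%N]card_ord max_card.
have hk8 : (8 * #|S| <= N)%N by rewrite /N leq_mul2l.
have cID := cardsID P S.
case: (posnP #|S|) => [k0|kp].
  move/eqP: (k0); rewrite cards_eq0 => /eqP ->.
  by rewrite finset.set0I finset.set0D cards0 !Fn_card0 big_set0; lra.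
have fk0 := Fn_ge0 R N n #|S|.
case: (eqVneq x 0) => [xz|xnz].
  subst x.
  have ell0 : forall i, ell (ag N i) 0 y = 0.
    by move=> i; rewrite /ell mulr0; case: ifP => h; lra.
  rewrite big1 ?add0r; last by move=> i _; apply: ell0.
  rewrite mul0r addr0.
  case: (lerP y 0) => hy.
    have -> : P = [set: 'I_T] by apply/setP => i; rewrite !inE mulr0 hy.
    by rewrite finset.setIT finset.setDT cards0 Fn_card0 addr0.
  have -> : P = finset.set0 by apply/setP => i; rewrite !inE mulr0 leNgt hy.
  by rewrite finset.setI0 finset.setD0 cards0 Fn_card0 add0r.
have xp : 0 < x by rewrite lt_def xnz x0.
case: (lerP x y) => hxy.
  have -> : P = finset.set0.
    apply/setP => i; rewrite !inE.
    have /andP[a0 a1] := ag_bounds i.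
    apply/negbTE; rewrite -ltNge; nra.
  rewrite finset.setI0 finset.setD0 cards0 Fn_card0 add0r.
  have D := @coreA R N n #|S| 0 ltac:(by rewrite addn0) ltac:(by rewrite addn0) hn9.
  rewrite addn0 mul0r mul0r addr0 in D.
  have hs : #|S|%:R * (x / 2) <= \sum_(i in S) ell (ag N i) x y.
    rewrite -sum1_card natr_sum mulr_suml; apply: ler_sum => i _.
    have /andP[a0 a1] := ag_bounds i.
    rewrite /ell ifF; first by nra.
    apply/negbTE; rewrite -ltNge; nra.
  have : x * (Fn R N n.+1 #|S| - Fn R N n #|S|) <= x * (#|S|%:R / 8) by apply: ler_wpM2l.
  have : 0 <= #|S|%:R :> R by rewrite ler0n.
  nra.
set kp' := #|S :&: P|.
set km := #|S :\: P|.
have ek : (km + kp')%N = #|S| by rewrite addnC.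
have hs1 : \sum_(i in S) ell (ag N i) x y
    = \sum_(i in S :&: P) ((ag N i * x - y) / 2) + \sum_(i in S :\: P) (x * (1 + ag N i) / 2).
  rewrite (bigID (fun i => i \in P)) /=; congr (_ + _).
    apply: eq_big => i; first by rewrite finset.in_setI.
    by move/andP=> [_]; rewrite /P inE /ell mulrC => ->.
  apply: eq_big => i; first by rewrite finset.in_setD andbC.
  by move/andP=> [_]; rewrite /P inE /ell mulrC => /negbTE ->.
have g := @grid_sum N T (S :&: P) (y / x) N0.
have g' : forall i, i \in S :&: P -> y / x <= ag N i.
  move=> i; rewrite finset.in_setI /P inE => /andP[_ h].
  by rewrite ler_pdivrMr.
have {g g'} g := g g'.
have e1 : \sum_(i in S :&: P) ((ag N i * x - y) / 2) = x / 2 * \sum_(i in S :&: P) (ag N i - y / x).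
  rewrite mulr_sumr; apply: eq_bigr => i _; field; exact: xnz.
have e2 : km%:R * (x / 2) <= \sum_(i in S :\: P) (x * (1 + ag N i) / 2).
  rewrite /km -sum1_card natr_sum mulr_suml; apply: ler_sum => i _.
  have /andP[a0 a1] := ag_bounds i; nra.
set Sg := ((km%:R + kp'%:R * (kp'%:R - 1) / (2 * N%:R)) / 8 : R).
have Sg0 : 0 <= Sg by apply: Sig_ge0.
have D := @coreA R N n km kp' ltac:(by rewrite ek) ltac:(by rewrite ek) hn9.
have X := @coreX R N n km kp' ltac:(by rewrite ek) ltac:(by rewrite ek).
rewrite ek -/Sg in D X.
have hell : x * (4 * Sg) <= \sum_(i in S) ell (ag N i) x y.
  rewrite hs1 e1.
  have : x / 2 * (kp'%:R * (kp'%:R - 1) / (2 * N%:R)) <= x / 2 * \sum_(i in S :&: P) (ag N i - y / x).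
    by apply: ler_wpM2l => //; lra.
  rewrite /Sg; lra.
have hD : x * (Fn R N n.+1 #|S| - Fn R N n #|S|) <= x * Sg by apply: ler_wpM2l.
have hX : - (x * Sg) <= (x + y) / 2 * (Fn R N n kp' + Fn R N n km - Fn R N n #|S|).
  case: (lerP 0 (Fn R N n kp' + Fn R N n km - Fn R N n #|S|)) => hX.
    have : 0 <= (x + y) / 2 * (Fn R N n kp' + Fn R N n km - Fn R N n #|S|) by apply: mulr_ge0 => //; lra.
    have : 0 <= x * Sg by apply: mulr_ge0.
    lra.
  have h1 : x * (Fn R N n kp' + Fn R N n km - Fn R N n #|S|) <= (x + y) / 2 * (Fn R N n kp' + Fn R N n km - Fn R N n #|S|).
    nra.
  have h2 : x * (- Sg) <= x * (Fn R N n kp' + Fn R N n km - Fn R N n #|S|) by apply: ler_wpM2l => //; lra.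
  lra.
have : 0 <= x * Sg by apply: mulr_ge0.
lra.
Qed.

End Grid.



Section Ind.
Variable R : realType.

Lemma Vind (T : nat) (pol : history -> scheme R) : (2 <= T)%N ->
  (forall h, valid_scheme (pol h)) ->
  forall n, (n <= T)%N -> forall h (S : {set 'I_T}),
  Fn R (8 * T) n #|S| <= \sum_(i in S) (n%:R * ((1 + ag R (8 * T) i) / 2)
        - exp_val (lam0 R) (rhoa (ag R (8 * T) i)) pol n h).
Proof.
move=> T2 valid.
set N := (8 * T)%N.
elim=> [|n IH] hn h S.
  rewrite Fn0; last by rewrite /N leq_mul2l -[X in (_ <= X)%N]card_ord max_card.
  by rewrite big1 // => i _ /=; rewrite mul0r subr0.
have hn' : (n <= T)%N by apply: ltnW.
set s := pol h.
have v := valid h.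
have [v0 _] := v.
have step : forall i : 'I_T,
   n.+1%:R * ((1 + ag R N i) / 2) - exp_val (lam0 R) (rhoa (ag R N i)) pol n.+1 h
   = \sum_(j < nsig s) (ell (ag R N i) (xs j) (ys j)
        + sigprob (lam0 R) s j * (n%:R * ((1 + ag R N i) / 2)
             - exp_val (lam0 R) (rhoa (ag R N i)) pol n
                 (rcons h (nat_of_ord j, ys j <= ag R N i * xs j)))).
  move=> i /=; rewrite -/s big_split /= -loss_eq //.
  have -> : \sum_(j < nsig s) sigprob (lam0 R) s j *
      (n%:R * ((1 + ag R N i) / 2) - exp_val (lam0 R) (rhoa (ag R N i)) pol n
         (rcons h (nat_of_ord j, ys j <= ag R N i * xs j)))
    = n%:R * ((1 + ag R N i) / 2) - \sum_(j < nsig s) sigprob (lam0 R) s j *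
         exp_val (lam0 R) (rhoa (ag R N i)) pol n
         (rcons h (nat_of_ord j, user_action (lam0 R) (rhoa (ag R N i)) s j)).
    rewrite -[X in X - _]mul1r -(sum_sp v) mulr_suml -sumrB; apply: eq_bigr => j _.
    by rewrite user_action_eq ?mulrBr ?[_ * sigprob _ _ _]mulrC //; apply: v0.
  rewrite -natr1; ring.
under eq_bigr do rewrite step.
rewrite exchange_big /=.
set k := #|S|.
have eF : Fn R N n.+1 k = \sum_(j < nsig s) (sigprob (lam0 R) s j * Fn R N n k
                + xs j * (Fn R N n.+1 k - Fn R N n k)).
  rewrite big_split /= -!mulr_suml sum_sp // sum_xs //; ring.
rewrite eF; apply: ler_sum => j _.
set P := [set i : 'I_T | ys j <= ag R N i * xs j].
rewrite big_split /= -mulr_sumr.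
have hIH : Fn R N n #|S :&: P| + Fn R N n #|S :\: P| <=
   \sum_(i in S) (n%:R * ((1 + ag R N i) / 2) - exp_val (lam0 R) (rhoa (ag R N i)) pol n
      (rcons h (nat_of_ord j, ys j <= ag R N i * xs j))).
  rewrite (bigID (fun i => i \in P)) /=.
  apply: lerD.
    apply: le_trans (IH hn' (rcons h (nat_of_ord j, true)) (S :&: P)) _.
    rewrite le_eqVlt; apply/orP; left; apply/eqP; apply: eq_big => i.
      by rewrite finset.in_setI.
    by rewrite finset.in_setI => /andP [_]; rewrite /P inE => ->.
  apply: le_trans (IH hn' (rcons h (nat_of_ord j, false)) (S :\: P)) _.
  rewrite le_eqVlt; apply/orP; left; apply/eqP; apply: eq_big => i.
    by rewrite finset.in_setD andbC.
  by rewrite finset.in_setD => /andP [+ _]; rewrite /P inE => /negbTE ->.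
have ps := @per_signal R T n (xs j) (ys j) S T2 hn (v0 _ _) (v0 _ _).
rewrite -/N -/P -/k in ps.
rewrite sigprob_eq.
apply: le_trans ps _.
apply: lerD => //.
apply: ler_wpM2l => //.
have := v0 ord0 j; have := v0 s1 j; rewrite /xs /ys; lra.
Qed.

End Ind.



Section Facts.
Variable R : realType.

Lemma prior0 : is_prior (lam0 R).
Proof.
split; first by move=> i; rewrite /lam0; lra.
by rewrite sum_state /lam0; lra.
Qed.

Lemma standing0 (a : R) : 0 < a < 1 -> standing (lam0 R) (rhoa a).
Proof.
move=> /andP[a0 a1]; split.
  by exists ord0; rewrite /omega /rhoa /lam0 eqxx /=; lra.
by rewrite sum_state /omega /rhoa /lam0 eqxx /=; lra.
Qed.

Definition pstar (a : R) : state -> R := fun i => if i == ord0 then 1 else a.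

Lemma s1_neq : (s1 == ord0) = false.
Proof. by []. Qed.

Lemma lp_opt0 (a : R) : 0 < a < 1 -> is_lp_opt (lam0 R) (rhoa a) (pstar a).
Proof.
move=> /andP[a0 a1]; split.
  split; first by move=> i; rewrite /pstar; case: ifP => _; apply/andP; split; lra.
  by rewrite sum_state /omega /rhoa /lam0 /pstar eqxx s1_neq /=; lra.
move=> q [qb qs].
move: qs; rewrite !sum_state /omega /rhoa /lam0 /pstar eqxx s1_neq /= => qs.
have /andP[q00 q01] := qb ord0; have /andP[q10 q11] := qb s1.
nra.
Qed.

Lemma lp_opt_uniq (a : R) p : 0 < a < 1 -> is_lp_opt (lam0 R) (rhoa a) p ->
  p ord0 = 1 /\ p s1 = a.
Proof.
move=> ha [[pb ps] popt].
have := popt _ (proj1 (lp_opt0 ha)).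
move: ps; rewrite !sum_state /omega /rhoa /lam0 /pstar eqxx s1_neq /= => ps hv.
have /andP[p00 p01] := pb ord0; have /andP[p10 p11] := pb s1.
move: ha => /andP[a0 a1].
have e0 : p ord0 = 1 by nra.
split => //; rewrite e0 in ps hv; lra.
Qed.

Lemma U_direct (a : R) p : 0 < a < 1 -> p ord0 = 1 -> p s1 = a ->
  U (lam0 R) (rhoa a) (direct p) = (1 + a) / 2.
Proof.
move=> /andP[a0 a1] h0 h1.
rewrite /U big_ord_recl big_ord_recl big_ord0 addr0.
rewrite !user_action_eq ?sigprob_eq /xs /ys /= ?h0 ?h1; try lra.
rewrite subrr mulr0 mulr1 lexx.
rewrite (_ : (1 - a <= 0) = false) /=; first by rewrite mulr0 add0r mulr1.
by apply/negbTE; rewrite -ltNge; lra.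
Qed.

Lemma exp_val_bounds (rho : utility R) (pol : history -> scheme R) :
  (forall h, valid_scheme (pol h)) ->
  forall n h, 0 <= exp_val (lam0 R) rho pol n h <= n%:R.
Proof.
move=> valid; elim=> [|n IH] h /=; first by rewrite lexx.
have [v0 _] := valid h.
have sp0 : forall j, 0 <= sigprob (lam0 R) (pol h) j.
  move=> j; rewrite sigprob_eq /xs /ys; have := v0 ord0 j; have := v0 s1 j; lra.
have U0 : 0 <= U (lam0 R) rho (pol h) <= 1.
  rewrite /U; apply/andP; split.
    by apply: sumr_ge0 => j _; apply: mulr_ge0 => //; rewrite ler0n.
  apply: (@le_trans _ _ (\sum_(j < nsig (pol h)) sigprob (lam0 R) (pol h) j)); last by rewrite sum_sp.
  apply: ler_sum => j _.
  by case: (user_action _ _ _ _); rewrite /= ?mulr1 ?mulr0 ?sp0.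
have S0 : 0 <= \sum_(j < nsig (pol h)) sigprob (lam0 R) (pol h) j *
    exp_val (lam0 R) rho pol n (rcons h (nat_of_ord j, user_action (lam0 R) rho (pol h) j)).
  apply: sumr_ge0 => j _; apply: mulr_ge0 => //; by have /andP[] := IH (rcons h (nat_of_ord j, user_action (lam0 R) rho (pol h) j)).
have S1 : \sum_(j < nsig (pol h)) sigprob (lam0 R) (pol h) j *
    exp_val (lam0 R) rho pol n (rcons h (nat_of_ord j, user_action (lam0 R) rho (pol h) j)) <= n%:R.
  apply: (@le_trans _ _ (\sum_(j < nsig (pol h)) sigprob (lam0 R) (pol h) j * n%:R)).
    2: by rewrite -mulr_suml sum_sp // mul1r.
  apply: ler_sum => j _.
  apply: ler_wpM2l => //; by have /andP[] := IH (rcons h (nat_of_ord j, user_action (lam0 R) rho (pol h) j)).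
rewrite -natr1; apply/andP; split; lra.
Qed.

End Facts.



Section Fin.
Variable R : realType.

Lemma final_log (T : nat) : (512 <= T)%N ->
  0 < ln (ln T%:R) :> R /\
  ln (ln T%:R) / 2 <= Lam R T - Phi R (8 * T) T.
Proof.
move=> hT.
have l2 : 1 / 2 <= ln (2 : R) <= 1.
  have := @ln_le_sub R 2 1 ltac:(lra) ltac:(lra).
  have := @ln_sub1 R 2 ltac:(lra).
  rewrite ln1; move=> *; apply/andP; split; lra.
have Tr : 512%:R <= T%:R :> R by rewrite ler_nat.
have e8 : ln (8 : R) = 3 * ln 2.
  rewrite (_ : (8 : R) = 2 ^+ 3); last by rewrite !exprS expr0; lra.
  by rewrite lnXn ?mulr_natl //; lra.
have e512 : ln (512 : R) = 9 * ln 2.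
  rewrite (_ : (512 : R) = 2 ^+ 9); last by rewrite !exprS expr0; lra.
  by rewrite lnXn ?mulr_natl //; lra.
have lT : 9 * ln 2 <= ln (T%:R : R).
  by rewrite -e512 ler_ln ?posrE //; lra.
have lT8 : ln (T%:R : R) <= ln (T + 8)%:R.
  rewrite ler_ln ?posrE ?ler_nat ?leq_addr //; try lra; rewrite ltr0n addn_gt0 orbT //.
have p8 : 0 < ln (8 : R) by lra.
have sq : ln (8 : R) ^+ 2 <= ln (T%:R : R).
  rewrite e8 expr2; nra.
have lsq : ln (ln (8 : R) ^+ 2) = 2 * ln (ln (8 : R)).
  by rewrite lnXn // mulr_natl.
have h1 : 2 * ln (ln (8 : R)) <= ln (ln T%:R).
  rewrite -lsq ler_ln ?posrE //; [by rewrite exprn_gt0|lra].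
have h2 : ln (ln T%:R) <= ln (ln (T + 8)%:R) :> R.
  by rewrite ler_ln ?posrE //; lra.
have ePhi : Phi R (8 * T) T = ln (ln 8).
  rewrite /Phi natrM mulfK //; rewrite pnatr_eq0; lia.
have pos : 0 < ln (ln T%:R) :> R.
  by apply: ln_gt0; lra.
split => //.
rewrite ePhi /Lam; lra.
Qed.

End Fin.

Unset Implicit Arguments.

Theorem mainTheorem2 (R : realType) :
  exists c : R, 0 < c /\
  exists T0 : nat, forall T : nat, (T0 <= T)%N ->
  forall (d : measure_display) (Omega : measurableType d)
         (P : probability Omega R)
         (alg : prior R -> Omega -> history -> scheme R),
    (forall lam w h, valid_scheme (alg lam w h)) ->
    (forall lam rho, is_prior lam -> standing lam rho ->
       measurable_fun setT (fun w => exp_val lam rho (alg lam w) T [::])) ->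
    exists (lam : prior R) (rho : utility R),
      is_prior lam /\ standing lam rho /\
      (exists p, is_lp_opt lam rho p) /\
      forall p, is_lp_opt lam rho p ->
        ((c * ln (ln T%:R))%:E <= regret P lam rho alg p T)%E.
Proof.
exists (1 / 384); split; first lra.
exists 512%N => T hT d Omega P alg hvalid hmeas.
set N := (8 * T)%N.
have T2 : (2 <= T)%N by lia.
have T0 : (0 < T)%N by lia.
have Tp : 0 < T%:R :> R by rewrite ltr0n.
pose a (i : 'I_T) : R := ag R N i.
have ha : forall i, 0 < a i < 1.
  by move=> i; have /andP[h1 h2] := ag_bounds R i; rewrite /a /N; apply/andP; split; lra.
have fb : forall i w, 0 <= exp_val (lam0 R) (rhoa (a i)) (alg (lam0 R) w) T [::] <= T%:R.
  by move=> i w; apply: exp_val_bounds.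
have fm : forall i, measurable_fun setT
    (fun w => exp_val (lam0 R) (rhoa (a i)) (alg (lam0 R) w) T [::]).
  move=> i; exact: (hmeas _ _ (prior0 R) (standing0 (ha i))).
have Ige0 : forall i, (0 <= \int[P]_w (exp_val (lam0 R) (rhoa (a i)) (alg (lam0 R) w) T [::])%:E)%E.
  move=> i; apply: integral_ge0 => w _; rewrite lee_fin; by have /andP[] := fb i w.
have Ile : forall i, (\int[P]_w (exp_val (lam0 R) (rhoa (a i)) (alg (lam0 R) w) T [::])%:E
     <= (T%:R)%:E)%E.
  move=> i.
  apply: (@le_trans _ _ (\int[P]_(w in setT) (cst (T%:R)%:E w))%E).
    apply: ge0_le_integral => //.
    - by move=> w _; rewrite lee_fin; have /andP[] := fb i w.
    - by apply/measurable_realfun.measurable_EFinP; apply: fm.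
    - by move=> w _; rewrite lee_fin; have /andP[] := fb i w.
  rewrite integral_cst //.
  have -> : (((T%:R)%:E) * P setT)%E = (T%:R)%:E by rewrite probability_setT mule1.
  by [].
pose I i := fine (\int[P]_w (exp_val (lam0 R) (rhoa (a i)) (alg (lam0 R) w) T [::])%:E).
have IE : forall i, (\int[P]_w (exp_val (lam0 R) (rhoa (a i)) (alg (lam0 R) w) T [::])%:E = (I i)%:E)%E.
  move=> i; rewrite /I fineK // ge0_fin_numE //.
  by apply: le_lt_trans (Ile i) _; apply: ltry.
pose B := \sum_(i < T) (T%:R * ((1 + a i) / 2)) - Fn R N T T.
have pw : forall w, \sum_(i < T) exp_val (lam0 R) (rhoa (a i)) (alg (lam0 R) w) T [::] <= B.
  move=> w.
  have V := @Vind R T (alg (lam0 R) w) T2 (hvalid _ w) T (leqnn T) [::] [set: 'I_T].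
  rewrite cardsT card_ord -/N in V.
  rewrite (eq_bigl (fun i => true)) in V; last by move=> i; rewrite finset.in_setT.
  rewrite sumrB in V; rewrite /B; lra.
have hsum : \sum_(i < T) I i <= B.
  rewrite -lee_fin -sumEFin.
  under eq_bigr do rewrite -IE.
  rewrite -ge0_integral_sum //; first last.
    - by move=> i w _; rewrite lee_fin; have /andP[] := fb i w.
    - by move=> i; apply/measurable_realfun.measurable_EFinP; apply: fm.
  apply: (@le_trans _ _ (\int[P]_(w in setT) (cst B%:E w))%E); last first.
    rewrite integral_cst //.
    have -> : ((B%:E) * P setT)%E = B%:E by rewrite probability_setT mule1.
    by [].
  apply: ge0_le_integral => //.
  - by move=> w _; rewrite sumEFin lee_fin; apply: sumr_ge0 => i _; have /andP[] := fb i w.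
  - by apply: emeasurable_sum => i; apply/measurable_realfun.measurable_EFinP; apply: fm.
  - by move=> w _; rewrite sumEFin lee_fin; apply: pw.
have [pos hl] := final_log R hT.
have FnT : T%:R * (2 * (1 / 384) * ln (ln T%:R)) <= Fn R N T T.
  apply: le_trans (Fn_lin R N T T).
  rewrite -/N in hl.
  have : T%:R * (ln (ln T%:R) / 2) <= T%:R * (Lam R T - Phi R N T) by apply: ler_wpM2l => //; lra.
  lra.
have [i hi] : exists i : 'I_T, 1 / 384 * ln (ln T%:R) <= T%:R * ((1 + a i) / 2) - I i.
  case: (boolP [exists i : 'I_T, 1 / 384 * ln (ln T%:R) <= T%:R * ((1 + a i) / 2) - I i]).
    by move/existsP.
  rewrite negb_exists => /forallP hall.
  have lt : \sum_(i < T) (T%:R * ((1 + a i) / 2) - I i) < \sum_(i < T) (1 / 384 * ln (ln T%:R)).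
    apply: ltr_sum.
      by apply/hasP; exists (Ordinal T0) => //; rewrite mem_index_enum.
    by move=> j _; have := hall j; rewrite -ltNge.
  rewrite sumr_const card_ord sumrB in lt.
  have e : (1 / 384 * ln (ln T%:R)) *+ T = T%:R * (1 / 384 * ln (ln T%:R)) :> R by rewrite mulr_natl.
  rewrite e in lt; exfalso.
  rewrite /B in hsum.
  have : 0 < T%:R * (1 / 384 * ln (ln T%:R)) :> R by apply: mulr_gt0 => //; lra.
  move=> hpos; lra.
exists (lam0 R), (rhoa (a i)); split; first exact: prior0.
split; first exact: standing0.
split; first by exists (pstar (a i)); apply: lp_opt0.
move=> p hp; have [p0 p1] := lp_opt_uniq (ha i) hp.
rewrite /regret U_direct // IE -EFinB lee_fin.
lra.
Qed.
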